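(* Let $N\ge 1$, let $L\in\mathbb{R}^{N\times N}$ be invertible and set $C=LL^T$. Let $D$ be the diagonal matrix with $D_{ii}=\sqrt{C_{ii}}$ (the standard deviations of $X\sim\mathcal N(0,C)$). Suppose $C$ is diagonally dominant in the sense that there is $\delta<1$ with $\sum_{j\neq i}|C_{ij}/C_{ii}|\le\delta$ for every $i$. Then $$\kappa(D^{-1}L)\le N^{1/4}\sqrt{\frac{1+\delta}{1-\delta}}.$$
   Context: For an invertible matrix $B\in\mathbb{R}^{N\times N}$, the condition number is $\kappa(B):=\|B\|_2\,\|B^{-1}\|_{S^4}$, where $\|\cdot\|_2$ is the spectral norm (largest singular value) and $\|A\|_{S^4}:=\left(\sum_{n=1}^N s_n^4\right)^{1/4}$ is the fourth Schatten norm, $s_1,\dots,s_N$ being the singular values of $A$. *)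

(* Defs.v *)
From mathcomp Require Import all_boot all_order all_algebra.
From mathcomp Require Import reals.
Set Implicit Arguments. Unset Strict Implicit. Unset Printing Implicit Defensive.
Import Order.TTheory GRing.Theory Num.Theory.
Local Open Scope ring_scope.

(* [s] is a (multi)set of singular values of the real square matrix [A]:
   the s_i are nonnegative and their squares are the eigenvalues of A^T A
   counted with multiplicity (char. polynomial of A^T A splits as below). *)
Definition singular_values (R : realType) (N : nat) (A : 'M[R]_N) (s : 'I_N -> R) : Prop :=
  (forall i, 0 <= s i) /\
  char_poly (A^T *m A) = \prod_(i < N) ('X - (s i ^+ 2)%:P).

Definition spec_norm_sv (R : realType) (N : nat) (s : 'I_N -> R) : R :=
  \big[Num.max/0]_(i < N) s i.

Definition schatten4_sv (R : realType) (N : nat) (s : 'I_N -> R) : R :=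
  Num.sqrt (Num.sqrt (\sum_(i < N) s i ^+ 4)).

(* condition number kappa(B) = ||B||_2 ||B^{-1}||_{S^4}, computed from
   singular values s of B and t of B^{-1}. *)
Definition kappa_sv (R : realType) (N : nat) (s t : 'I_N -> R) : R :=
  spec_norm_sv s * schatten4_sv t.

(* Main.v *)
Require Import Defs.
From mathcomp Require Import all_boot all_order all_algebra.
From mathcomp Require Import reals.
Import Order.TTheory GRing.Theory Num.Theory.
Local Open Scope ring_scope.

Lemma gersh (R : realType) (N : nat) (C : 'M[R]_N) (delta a : R) (w : 'rV[R]_N) :
  (forall i j, C i j = C j i) -> (forall i, C i i != 0) ->
  (forall i : 'I_N, \sum_(j < N | j != i) `|C i j / C i i| <= delta) ->
  w != 0 -> w *m (C *m diag_mx (\row_j (C j j)^-1)) = a *: w -> `|a - 1| <= delta.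
Proof.
move=> Cs Cn hs w0 Heq.
have [j0 Hj0]: exists j, w 0 j != 0.
  apply/existsP; apply: contraR w0 => /existsPn H; apply/eqP/matrixP => i j.
  by rewrite mxE (ord1 i); apply/eqP; move: (H j); rewrite negbK.
case: (@arg_maxP _ _ _ j0 predT (fun j => `|w 0 j|)) => // j _ Hj.
have wj : 0 < `|w 0 j|.
  by apply: lt_le_trans (Hj j0 isT); rewrite normr_gt0.
move/(congr1 (fun M : 'rV[R]_N => M 0 j)): Heq; rewrite mxE mxE.
under eq_bigr => i _ do rewrite mul_mx_diag !mxE.
rewrite (bigD1 j) //= mulfV // mulr1 => Heq.
have E : (a - 1) * w 0 j = \sum_(i < N | i != j) w 0 i * (C i j * (C j j)^-1).
  by rewrite mulrBl -Heq mul1r addrAC subrr add0r.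
have : `|a - 1| * `|w 0 j| <= `|w 0 j| * delta.
  rewrite -normrM E; apply: le_trans (ler_norm_sum _ _ _) _.
  apply: le_trans (_ : \sum_(i < N | i != j) `|w 0 j| * `|C j i / C j j| <= _).
    apply: ler_sum => i _; rewrite normrM (Cs i j); apply: ler_wpM2r => //.
    exact: Hj.
  by rewrite -mulr_sumr ler_wpM2l // ?normr_ge0.
by rewrite mulrC ler_pM2l.
Qed.

Lemma mK {R : realType} {n m} {A : 'M[R]_n} (B : 'M[R]_(m,n)) :
  A \in unitmx -> B *m A *m invmx A = B.
Proof. by move=> Au; rewrite -mulmxA mulmxV // mulmx1. Qed.
Lemma mKV {R : realType} {n m} {A : 'M[R]_n} (B : 'M[R]_(m,n)) :
  A \in unitmx -> B *m invmx A *m A = B.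
Proof. by move=> Au; rewrite -mulmxA mulVmx // mulmx1. Qed.

Theorem proposition1 (R : realType) (N : nat) (L : 'M[R]_N) (delta : R) :
  (0 < N)%N ->
  L \in unitmx ->
  let C := L *m L^T in
  let D := diag_mx (\row_(i < N) Num.sqrt (C i i)) in
  delta < 1 ->
  (forall i : 'I_N, \sum_(j < N | j != i) `|C i j / C i i| <= delta) ->
  forall s t : 'I_N -> R,
    singular_values (invmx D *m L) s ->
    singular_values (invmx (invmx D *m L)) t ->
    kappa_sv s t <= Num.sqrt (Num.sqrt (N%:R)) * Num.sqrt ((1 + delta) / (1 - delta)).
Proof.
move=> hN Lu C D hd hsum s t [s0 hs] [t0 ht].
have Cs : forall i j, C i j = C j i.
  by move=> i j; rewrite /C !mxE; apply: eq_bigr => k _; rewrite !mxE mulrC.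
have Cpos : forall i, 0 < C i i.
  move=> i; have Cii : C i i = \sum_k L i k ^+ 2.
    by rewrite /C mxE; apply: eq_bigr => k _; rewrite mxE expr2.
  rewrite lt_neqAle Cii sumr_ge0 ?andbT; last by move=> k _; rewrite sqr_ge0.
  apply/negP => /eqP/esym H0.
  have Hr : row i L = 0.
    apply/rowP => k; rewrite !mxE.
    by apply/eqP; rewrite -sqrf_eq0; apply/eqP; apply: (psumr_eq0P _ H0) => // m _; rewrite sqr_ge0.
  have : ('e_i : 'rV[R]_N) = 0.
    by rewrite -(mK 'e_i Lu) -rowE Hr mul0mx.
  by move/matrixP/(_ 0 i); rewrite !mxE andTb eqxx mulr1n => /eqP; rewrite oner_eq0.
have Cn : forall i, C i i != 0 by move=> i; rewrite gt_eqF.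
have hd0 : 0 <= delta.
  by apply: le_trans (hsum (Ordinal hN)); apply: sumr_ge0 => j _.
set E := diag_mx (\row_i (Num.sqrt (C i i))^-1).
have DE : D *m E = 1%:M.
  rewrite mul_diag_mx; apply/matrixP => i j; rewrite !mxE.
  case: eqP => _; rewrite ?mulr0n ?mulr1n ?mulr0 //.
  by rewrite mulfV // sqrtr_eq0 -ltNge; move: (Cpos i); rewrite mxE.
have [Du Eu] := mulmx1_unit DE.
have iD : invmx D = E by rewrite -[RHS](mulKmx Du) DE mulmx1.
have ET : E^T = E by rewrite tr_diag_mx.
have EE : E *m E = diag_mx (\row_j (C j j)^-1).
  rewrite mul_diag_mx; apply/matrixP => i j; rewrite !mxE.
  case: eqP => _; rewrite ?mulr0n ?mulr1n ?mulr0 //.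
  by rewrite -invfM -expr2 sqr_sqrtr //; move: (ltW (Cpos i)); rewrite mxE.
rewrite iD in hs ht.
set A := E *m L.
have Au : A \in unitmx by rewrite unitmx_mul Eu Lu.
have G := @gersh R N C delta _ _ Cs Cn hsum.
have hS : forall i, s i ^+ 2 <= 1 + delta.
  move=> i.
  have : root (char_poly (A^T *m A)) (s i ^+ 2).
    by rewrite hs /root horner_prod (bigD1 i) //= !hornerE subrr mul0r.
  rewrite -eigenvalue_root_char => /eigenvalueP [v Hv v0].
  have Hw : (v *m invmx L) *m (C *m (E *m E)) = s i ^+ 2 *: (v *m invmx L).
    rewrite scalemxAl -Hv /A trmx_mul ET /C.
    by rewrite !mulmxA mKV // mK.
  have w0 : v *m invmx L != 0.
    apply: contra v0 => /eqP w0; by rewrite -(mKV v Lu) w0 mul0mx.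
  rewrite EE in Hw; have := G _ _ w0 Hw.
  by rewrite ler_distl => /andP [].
have hT : forall i, t i ^+ 4 * (1 - delta) ^+ 2 <= 1.
  move=> i.
  have : root (char_poly ((invmx A)^T *m invmx A)) (t i ^+ 2).
    by rewrite ht /root horner_prod (bigD1 i) //= !hornerE subrr mul0r.
  rewrite -eigenvalue_root_char => /eigenvalueP [v Hv v0].
  set mu := t i ^+ 2 in Hv *.
  have H2 : v = mu *: (v *m (A *m A^T)).
    have key : (invmx A)^T *m invmx A *m (A *m A^T) = 1%:M.
      by rewrite -mulmxA (mulmxA (invmx A)) mulVmx // mul1mx -trmx_mul mulmxV // trmx1.
    by rewrite scalemxAl -Hv -mulmxA key mulmx1.
  have mu0 : mu != 0.
    by apply: contra v0 => /eqP m0; rewrite H2 m0 scale0r.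
  have H3 : v *m (A *m A^T) = mu^-1 *: v by rewrite {2}H2 scalerA mulVf // scale1r.
  have Hw : (v *m E) *m (C *m (E *m E)) = mu^-1 *: (v *m E).
    rewrite scalemxAl -H3 /A trmx_mul ET /C.
    by rewrite !mulmxA.
  have w0 : v *m E != 0.
    apply: contra v0 => /eqP w0; by rewrite -(mK v Eu) w0 mul0mx.
  rewrite EE in Hw; have := G _ _ w0 Hw.
  rewrite ler_distl => /andP [H _].
  have mupos : 0 < mu by rewrite lt_neqAle eq_sym mu0 sqr_ge0.
  have H1 : mu * (1 - delta) <= 1.
    by rewrite mulrC -ler_pdivlMr // div1r.
  have -> : t i ^+ 4 * (1 - delta) ^+ 2 = (mu * (1 - delta)) ^+ 2.
    by rewrite exprMn /mu -exprM.
  rewrite exprn_ile1 //.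
  by rewrite mulr_ge0 ?subr_ge0 ?ltW.
rewrite /kappa_sv /spec_norm_sv /schatten4_sv.
set S := \big[_/_]_(i < N) _.
have S0 : 0 <= S.
  apply: (big_ind (fun x => 0 <= x)) => // x y hx hy.
  by rewrite le_max hx.
have SS : S <= Num.sqrt (1 + delta).
  apply: bigmax_le => [|i _]; first exact: sqrtr_ge0.
  rewrite -(ger0_norm (s0 i)) -sqrtr_sqr; apply: ler_wsqrtr; exact: hS.
have d1 : 0 < 1 - delta by rewrite subr_gt0.
have XX : Num.sqrt (Num.sqrt (\sum_(i < N) t i ^+ 4)) <=
          Num.sqrt (Num.sqrt N%:R) * Num.sqrt ((1 - delta)^-1).
  have e : (1 - delta)^-1 = Num.sqrt (((1 - delta)^-1) ^+ 2).
    by rewrite sqrtr_sqr ger0_norm // invr_ge0 ltW.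
  rewrite -sqrtrM ?sqrtr_ge0 // {1}e -sqrtrM ?ler0n //.
  apply: ler_wsqrtr; apply: ler_wsqrtr.
  apply: le_trans (_ : \sum_(i < N) ((1 - delta)^-1) ^+ 2 <= _).
    apply: ler_sum => i _; rewrite exprVn -div1r ler_pdivlMr ?exprn_gt0 //.
  by rewrite big_const_ord iter_addr_0 mulr_natl.
apply: le_trans (_ : Num.sqrt (1 + delta) *
   (Num.sqrt (Num.sqrt N%:R) * Num.sqrt ((1 - delta)^-1)) <= _).
  by apply: ler_pM => //; exact: sqrtr_ge0.
by rewrite mulrCA -(@sqrtrM _ (1 + delta)) ?addr_ge0.
Qed.
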